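(* Let $k,m$ be positive integers with $k>1$, let $\mathbf{A}$ be a finite algebra having a $k$-edge operation among its term operations, and let $F\subseteq G$ be subuniverses of $\mathbf{A}^m$. Assume $\pi_T(F)=\pi_T(G)$ for all $T\subseteq\{1,\dots,m\}$ with $|T|<k$, and $\varphi_i(G)\subseteq\varphi_i(F)$ for all $i\in\{1,\dots,m\}$. Then $F=G$.
   Context: For $k\ge 2$, a $k$-edge operation on $A$ is $t:A^{k+1}\to A$ such that for all $x,y\in A$: $t(y,y,x,x,\dots,x)=x$, $t(y,x,y,x,\dots,x)=x$, and for each $i\in\{4,\dots,k+1\}$, $t(x,\dots,x,y,x,\dots,x)=x$ with $y$ in position $i$. For $\mathbf{a}=(a_1,\dots,a_m)\in A^m$ and $T\subseteq\{1,\dots,m\}$, $\pi_T(\mathbf{a}):=(a_i)_{i\in T}$, and $\pi_T(F):=\{\pi_T(\mathbf{a}):\mathbf{a}\in F\}$. For $F\subseteq A^m$ and $i\in\{1,\dots,m\}$, $\varphi_i(F):=\{(a_i,b_i)\in A^2 : \mathbf{a},\mathbf{b}\in F,\ \pi_{\{1,\dots,i-1\}}(\mathbf{a})=\pi_{\{1,\dots,i-1\}}(\mathbf{b})\}$. *)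

(* Defs.v *)
From mathcomp Require Import all_boot.
Set Implicit Arguments. Unset Strict Implicit. Unset Printing Implicit Defensive.

(* An algebra is given by a finite carrier A, a type I of operation symbols,
   an arity function ar, and the interpretation op of each symbol. *)

Inductive term (I : Type) (ar : I -> nat) (n : nat) : Type :=
| Var : 'I_n -> term ar n
| App : forall i : I, ('I_(ar i) -> term ar n) -> term ar n.

Fixpoint eval (A : Type) (I : Type) (ar : I -> nat)
    (op : forall i : I, ('I_(ar i) -> A) -> A) (n : nat) (t : term ar n)
    (x : 'I_n -> A) : A :=
  match t with
  | Var j => x j
  | App i ts => op i (fun j => eval op (ts j) x)
  end.

Definition term_op (A : Type) (I : Type) (ar : I -> nat)
    (op : forall i : I, ('I_(ar i) -> A) -> A) (n : nat)
    (f : ('I_n -> A) -> A) : Prop :=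
  exists t : term ar n, forall x, eval op t x = f x.

(* k-edge operation t : A^(k+1) -> A (positions are 0-based here:
   paper positions 1,2,3,i correspond to 0,1,2,i-1). *)
Definition edge_op (A : Type) (k : nat) (t : ('I_k.+1 -> A) -> A) : Prop :=
  forall x y : A,
    [/\ t (fun j => if (val j == 0) || (val j == 1) then y else x) = x,
        t (fun j => if (val j == 0) || (val j == 2) then y else x) = x
      & forall i : 'I_k.+1, 3 <= val i ->
          t (fun j => if j == i then y else x) = x].

Definition subuniverse (A : finType) (I : Type) (ar : I -> nat)
    (op : forall i : I, ('I_(ar i) -> A) -> A) (m : nat)
    (F : {set {ffun 'I_m -> A}}) : Prop :=
  forall (i : I) (a : 'I_(ar i) -> {ffun 'I_m -> A}),
    (forall j, a j \in F) -> [ffun c => op i (fun j => a j c)] \in F.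

(* pi_T(a) = (a_i)_{i in T}, encoded as a function on 'I_m that is
   undefined (None) outside T. *)
Definition proj (A : finType) (m : nat) (T : {set 'I_m}) (a : {ffun 'I_m -> A})
  : {ffun 'I_m -> option A} :=
  [ffun i => if i \in T then Some (a i) else None].

Definition projS (A : finType) (m : nat) (T : {set 'I_m})
    (F : {set {ffun 'I_m -> A}}) : {set {ffun 'I_m -> option A}} :=
  [set proj T a | a in F].

(* phi_i(F) = {(a_i,b_i) : a,b in F, a and b agree on coordinates before i}
   (0-based: the coordinates j < i). *)
Definition phi (A : finType) (m : nat) (i : 'I_m) (F : {set {ffun 'I_m -> A}})
  : {set A * A} :=
  [set p : A * A | [exists a in F, exists b in F,
     (proj [set j : 'I_m | val j < val i] a ==
      proj [set j : 'I_m | val j < val i] b) && (p == (a i, b i))]].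

(* Main.v *)
Require Import Defs.
From mathcomp Require Import all_boot.
From Stdlib Require Import FunctionalExtensionality Lia.
Set Implicit Arguments. Unset Strict Implicit. Unset Printing Implicit Defensive.

Lemma term_closed (A : finType) (I : Type) (ar : I -> nat)
    (op : forall i : I, ('I_(ar i) -> A) -> A) (m : nat)
    (F : {set {ffun 'I_m -> A}}) (hF : subuniverse op F) (n : nat)
    (tm : term ar n) (v : 'I_n -> {ffun 'I_m -> A}) :
  (forall p, v p \in F) -> [ffun c => eval op tm (fun p => v p c)] \in F.
Proof.
move=> hv; elim: tm => [j|i ts IH] /=.
  have -> : [ffun c => v j c] = v j by apply/ffunP => c; rewrite ffunE.
  exact: hv.
have := hF i (fun j => [ffun c => eval op (ts j) (fun p => v p c)]) IH.
congr (_ \in F); apply/ffunP => c; rewrite !ffunE; congr (op i _).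
by apply: functional_extensionality => j; rewrite ffunE.
Qed.

Lemma edge_A (A : eqType) (k : nat) (t : ('I_k.+1 -> A) -> A) (he : edge_op t)
  (f : 'I_k.+1 -> A) (x y : A) :
  (forall p : 'I_k.+1, 1 < val p -> f p = x) ->
  (forall p : 'I_k.+1, val p < 2 -> f p = y) -> t f = x.
Proof.
move=> h1 h2; have [E _ _] := he x y; rewrite -[RHS]E; congr t.
apply: functional_extensionality => j.
case: ifP => [/orP[]/eqP e|]; first by rewrite h2 // e.
  by rewrite h2 // e.
move=> /norP[e0 e1]; apply: h1.
by case: (val j) e0 e1 => [|[|]].
Qed.

Lemma edge_B (A : eqType) (k : nat) (t : ('I_k.+1 -> A) -> A) (he : edge_op t)
  (f : 'I_k.+1 -> A) (x y : A) :
  (forall p : 'I_k.+1, (val p == 1) || (2 < val p) -> f p = x) ->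
  (forall p : 'I_k.+1, (val p == 0) || (val p == 2) -> f p = y) -> t f = x.
Proof.
move=> h1 h2; have [_ E _] := he x y; rewrite -[RHS]E; congr t.
apply: functional_extensionality => j.
case: ifP => [e|]; first by rewrite h2.
move=> /norP[e0 e1]; apply: h1.
by case: (val j) e0 e1 => [|[|[|]]].
Qed.

Lemma edge_C (A : eqType) (k : nat) (t : ('I_k.+1 -> A) -> A) (he : edge_op t)
  (f : 'I_k.+1 -> A) (x : A) :
  (forall p : 'I_k.+1, val p < 3 -> f p = x) ->
  (forall p q : 'I_k.+1, f p != x -> f q != x -> p = q) -> t f = x.
Proof.
move=> h1 h2.
case: (pickP (fun p => f p != x)) => [p0 hp0|hn].
  have hv : 3 <= val p0.
    by rewrite leqNgt; apply/negP => /h1 e; rewrite e eqxx in hp0.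
  have [_ _ h3] := he x (f p0); rewrite -[RHS](h3 p0 hv); congr t.
  apply: functional_extensionality => j.
  case: ifP => [/eqP -> //|/negbT ne].
  apply/eqP; apply: contraR ne => nj; apply/eqP; exact: h2.
have [E _ _] := he x x; rewrite -[RHS]E; congr t.
apply: functional_extensionality => j.
have := hn j => /= /negbFE /eqP ->; by case: ifP.
Qed.

Definition sel (T : Type) (n : nat) (u0 u1 u2 u3 : T) : T :=
  match n with 0 => u0 | 1 => u1 | 2 => u2 | _ => u3 end.

Theorem lemma4p1 (A : finType) (I : Type) (ar : I -> nat)
    (op : forall i : I, ('I_(ar i) -> A) -> A) (k m : nat)
    (hk : 1 < k) (hm : 0 < m)
    (hedge : exists t : ('I_k.+1 -> A) -> A, term_op op t /\ edge_op t)
    (F G : {set {ffun 'I_m -> A}})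
    (hF : subuniverse op F) (hG : subuniverse op G) (hFG : F \subset G)
    (hproj : forall T : {set 'I_m}, #|T| < k -> projS T F = projS T G)
    (hphi : forall i : 'I_m, phi i G \subset phi i F) :
  F = G.
Proof.
case: hedge => t [[tm htm] he].
have closF : forall x : 'I_k.+1 -> {ffun 'I_m -> A}, (forall p, x p \in F) ->
    [ffun c => t (fun p => x p c)] \in F.
  move=> x hx; have := term_closed hF tm hx; congr (_ \in F).
  by apply/ffunP => c; rewrite !ffunE htm.
apply/eqP; rewrite eqEsubset hFG /=; apply/subsetP => b hb.
pose C (S : {set 'I_m}) := exists z, z \in F /\ forall j, j \in S -> z j = b j.
have base : forall S : {set 'I_m}, #|S| < k -> C S.
  move=> S hS; have e := hproj S hS.
  have : proj S b \in projS S G by apply/imsetP; exists b.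
  rewrite -e => /imsetP [z zF ez]; exists z; split => // j jS.
  by have := congr1 (fun f : {ffun _ -> _} => f j) ez; rewrite !ffunE jS => -[].
have step : forall (i : 'I_m) (S : {set 'I_m}), i \in S ->
    (forall j, j \in S -> val j <= val i) -> C [set j : 'I_m | val j < val i] ->
    (forall j, j \in S -> j != i -> C (S :\ j)) -> C S.
  move=> i S iS Sle [a [aF ha]] IH.
  case: (ltnP #|S| k) => [/base //|hkS].
  have lt_of : forall j, j \in S -> j != i -> val j < val i.
    move=> j jS ji; rewrite ltn_neqAle Sle // andbT.
    by apply: contra ji => /eqP e; apply/eqP/val_inj.
  have : (a i, b i) \in phi i G.
    rewrite inE; apply/existsP; exists a; rewrite (subsetP hFG) //=.
    apply/existsP; exists b; rewrite hb /= eqxx andbT; apply/eqP/ffunP => j.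
    rewrite !ffunE; case: ifP => // /[!inE] hj; by rewrite ha // inE.
  move/(subsetP (hphi i)); rewrite inE => /existsP [c /andP [cF /existsP [d /andP [dF /andP [/eqP ecd /eqP [eac ebd]]]]]].
  pose Inv (s : seq 'I_m) := exists a c d, [/\ a \in F, c \in F, d \in F &
      (forall j, j \in S -> j != i -> a j = b j)] /\ [/\
      (forall j : 'I_m, val j < val i -> c j = d j),
      a i = c i, d i = b i & (forall j, j \in s -> c j = b j)].
  have inv0 : Inv [::].
    exists a, c, d; split; split => //.
    - by move=> j jS ji; apply: ha; rewrite inE lt_of.
    - move=> j hj; have := congr1 (fun f : {ffun _ -> _} => f j) ecd.
      by rewrite !ffunE inE hj => -[].
  have invS : forall s, {subset s <= S :\ i} -> Inv s.
    elim => [|j0 s IHs] hs; first exact: inv0.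
    have hs' : {subset s <= S :\ i} by move=> x xs; apply: hs; rewrite inE xs orbT.
    have [a1 [c1 [d1 [[a1F c1F d1F ha1] [hcd1 eac1 ebd1 hc1]]]]] := IHs hs'.
    have := hs j0 (mem_head _ _); rewrite !inE => /andP [j0i j0S].
    pose R := S :\ i :\ j0.
    have cardR : k <= #|R| + 2.
      have j0S' : j0 \in S :\ i by rewrite !inE j0i j0S.
      move: hkS; rewrite (cardsD1 i S) iS (cardsD1 j0 (S :\ i)) j0S' -/R.
      by rewrite add1n add1n addn2.
    pose jl (p : 'I_k.+1) := nth i (enum R) (val p - 3).
    have jlsz : forall p : 'I_k.+1, 3 <= val p -> val p - 3 < size (enum R).
      move=> p hp; rewrite -cardE; have : val p < k.+1 := ltn_ord p.
      move: hp cardR; move: (val p) (#|R|) => n r.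
      move=> /leP h1 /leP h2 /leP h3; apply/ltP.
      rewrite -?plusE -?minusE in h2 *; lia.
    have jlR : forall p, 3 <= val p -> jl p \in R.
      by move=> p hp; rewrite -mem_enum; apply: mem_nth; apply: jlsz.
    have jlinj : forall p q, 3 <= val p -> 3 <= val q -> jl p = jl q -> p = q.
      move=> p q hp hq /eqP; rewrite /jl nth_uniq ?enum_uniq ?jlsz // => /eqP e.
      apply: val_inj; move: e hp hq; move: (val p) (val q) => n n'.
      move=> e /leP h1 /leP h2; rewrite -?minusE in e; lia.
    have hex : forall p : 'I_k.+1, exists z : {ffun 'I_m -> A},
        z \in F /\ (3 <= val p -> forall j, j \in S -> j != jl p -> z j = b j).
      move=> p; case: (leqP 3 (val p)) => hp; last first.
        by exists a1; split => //; rewrite leqNgt hp.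
      have := jlR p hp; rewrite !inE => /andP [_ /andP [jli jS]].
      have [z [zF hz]] := IH (jl p) jS jli.
      by exists z; split => // _ j jS' jne; apply: hz; rewrite !inE jne jS'.
    have [H hH] := fin_all_exists hex.
    have hC : forall (f : 'I_k.+1 -> A) j, j \in S -> j != i ->
        (forall p, val p < 3 -> f p = b j) ->
        (forall p, 3 <= val p -> f p = H p j) -> t f = b j.
      move=> f j jS ji h1 h2; apply: (edge_C he) => // p q hp hq.
      have g : forall p, f p != b j -> 3 <= val p /\ jl p = j.
        move=> p' hp'; have g3 : 3 <= val p'.
          by rewrite leqNgt; apply/negP => /h1 e; rewrite e eqxx in hp'.
        split => //; apply/eqP; apply: contraR hp' => ne; rewrite h2 //.
        by apply/eqP; apply: (hH p').2 => //; rewrite eq_sym.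
      have [gp ep] := g p hp; have [gq eq] := g q hq.
      by apply: jlinj => //; rewrite ep eq.
    pose Xa (p : 'I_k.+1) := sel (val p) a1 a1 a1 (H p).
    pose Xc (p : 'I_k.+1) := sel (val p) c1 a1 c1 (H p).
    pose Xd (p : 'I_k.+1) := sel (val p) c1 a1 d1 (H p).
    have inF : forall x1 x2 x3, x1 \in F -> x2 \in F -> x3 \in F ->
        forall p : 'I_k.+1, sel (val p) x1 x2 x3 (H p) \in F.
      by move=> x1 x2 x3 h1 h2 h3 p; case: (val p) => [|[|[|n]]] //=; apply: (hH p).1.
    exists [ffun j => t (fun p => Xa p j)], [ffun j => t (fun p => Xc p j)],
      [ffun j => t (fun p => Xd p j)]; split; split.
    - by apply: closF => p; apply: inF.
    - by apply: closF => p; apply: inF.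
    - by apply: closF => p; apply: inF.
    - move=> j jS ji; rewrite ffunE; apply: hC => // p.
        by rewrite /Xa; case: (val p) => [|[|[|n]]] //= _; apply: ha1.
      by rewrite /Xa; case: (val p) => [|[|[|n]]].
    - move=> j hj; rewrite !ffunE; congr t; apply: functional_extensionality => p.
      by rewrite /Xc /Xd; case: (val p) => [|[|[|n]]] //=; rewrite hcd1.
    - rewrite !ffunE; congr t; apply: functional_extensionality => p.
      by rewrite /Xc /Xa; case: (val p) => [|[|[|n]]] //=; rewrite eac1.
    - rewrite ffunE; apply: (edge_A he (y := a1 i)) => p.
        rewrite /Xd; case hv: (val p) => [|[|[|n]]] //= _.
        have h3 : 3 <= val p by rewrite hv.
        apply: (hH p).2 => //; have := jlR p h3; rewrite !inE.
        by case/and3P => _ ji _; rewrite eq_sym.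
      by rewrite /Xd; case: (val p) => [|[|[|n]]] //= _; rewrite eac1.
    - move=> j; rewrite inE ffunE => /orP [/eqP ->|js].
        apply: (edge_B he (y := c1 j0)) => p.
          rewrite /Xc; case hv: (val p) => [|[|[|n]]] //= hp; first exact: ha1.
          have h3 : 3 <= val p by rewrite hv.
          apply: (hH p).2 => //; have := jlR p h3; rewrite !inE.
          by case/and3P => ji _ _; rewrite eq_sym.
        by rewrite /Xc; case: (val p) => [|[|[|n]]].
      have := hs' j js; rewrite !inE => /andP [ji jS].
      apply: hC => // p.
        by rewrite /Xc; case: (val p) => [|[|[|n]]] //= _; [apply: hc1 | apply: ha1 | apply: hc1].
      by rewrite /Xc; case: (val p) => [|[|[|n]]].
  have [_ [c1 [d1 [[_ _ d1F _] [hcd1 _ ebd1 hc1]]]]] := invS (enum (S :\ i)) (fun x => ltac:(by rewrite mem_enum)).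
  exists d1; split => // j jS; case: (eqVneq j i) => [->//|ji].
  by rewrite -hcd1 ?lt_of // hc1 // mem_enum !inE ji.
have all_n : forall n (S : {set 'I_m}), (forall j, j \in S -> val j < n) -> C S.
  elim => [|n IHn] S hS.
    case: (ltnP #|S| k) => [/base //|hkS].
    have : 0 < #|S| by apply: leq_trans hkS; apply: ltnW.
    by case/card_gt0P => j /hS.
  suff H : forall c (S : {set 'I_m}), #|S| <= c ->
      (forall j, j \in S -> val j < n.+1) -> C S by exact: (H _ _ (leqnn _)).
  elim => [|c IHc] S' hc hS'.
    by apply: base; apply: leq_ltn_trans hc (ltnW hk).
  case: (boolP [exists j in S', val j == n]) => [/existsP [i /andP [iS /eqP hi]] | hno].
    apply: (step i) => //.
    - by move=> j jS; rewrite hi -ltnS; exact: hS'.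
    - by apply: IHn => j; rewrite inE hi.
    - move=> j jS ji; apply: IHc.
        by rewrite (cardsD1 j S') jS add1n ltnS in hc.
      by move=> x; rewrite !inE => /andP [_ /hS'].
  apply: IHn => j jS; have := hS' j jS; rewrite ltnS leq_eqVlt => /orP [/eqP e|//].
  by exfalso; move/negP: hno; apply; apply/existsP; exists j; rewrite jS e eqxx.
have [z [zF hz]] := all_n m [set: 'I_m] (fun j _ => ltn_ord j).
suff -> : b = z by [].
by apply/ffunP => j; rewrite hz ?inE.
Qed.
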